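(* Let $(\mathbf{x}^1,y_l^1,y_r^1),\dots,(\mathbf{x}^T,y_l^T,y_r^T)$ be a sequence of examples with $\mathbf{x}^t\in\mathbb{R}^d$ and integers $1\le y_l^t\le y_r^t\le K$, and run PA-II with parameter $C>0$ starting from $\mathbf{w}^1=\mathbf{0}$, $\boldsymbol\theta^1=\mathbf{0}$. Let $\mathbf{v}^*=(\mathbf{u}^*,\mathbf{b}^* )$, $\mathbf{u}^*\in\mathbb{R}^d$, $\mathbf{b}^*\in\mathbb{R}^{K-1}$, be an ideal predictor: $\mathbf{u}^*\cdot\mathbf{x}^t-b_i^*\ge1$ for all $i\in\{1,\dots,y_l^t-1\}$, $t\in[T]$, and $\mathbf{u}^*\cdot\mathbf{x}^t-b_i^*\le-1$ for all $i\in\{y_r^t,\dots,K-1\}$, $t\in[T]$. Let $c=\min_{t\in[T]}(y_r^t-y_l^t)$ and $R^2=\max_{t\in[T]}\Vert\mathbf{x}^t\Vert^2$. Then $$\sum_{t=1}^T\sum_{i=1}^{K-1}(l_i^t)^2\le\left(1+\frac{1}{2C}+R^2(K-c-1)\right)\Vert\mathbf{v}^*\Vert^2,$$ where $\Vert\mathbf{v}^*\Vert^2=\Vert\mathbf{u}^*\Vert^2+\Vert\mathbf{b}^*\Vert^2$.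
   Context: PA-II algorithm with parameter $C>0$: at trial $t$, with $I_t=\{1,\dots,y_l^t-1\}\cup\{y_r^t,\dots,K-1\}$, $(\mathbf{w}^{t+1},\boldsymbol\theta^{t+1})$ is the $(\mathbf{w},\boldsymbol\theta)$-part of the minimizer over $\mathbf{w},\boldsymbol\theta,(\xi_i)_{i\in I_t}$ of $\tfrac12\Vert\mathbf{w}-\mathbf{w}^t\Vert^2+\tfrac12\Vert\boldsymbol\theta-\boldsymbol\theta^t\Vert^2+C\sum_{i\in I_t}\xi_i^2$ subject to $\mathbf{w}\cdot\mathbf{x}^t-\theta_i\ge1-\xi_i$ ($i\le y_l^t-1$) and $\mathbf{w}\cdot\mathbf{x}^t-\theta_i\le-1+\xi_i$ ($i\ge y_r^t$). Losses: $l_i^t=\max(0,1+\theta_i^t-\mathbf{w}^t\cdot\mathbf{x}^t)$ for $1\le i\le y_l^t-1$, $l_i^t=\max(0,1+\mathbf{w}^t\cdot\mathbf{x}^t-\theta_i^t)$ for $y_r^t\le i\le K-1$, $l_i^t=0$ otherwise. *)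

(* Defs.v *)
From HB Require Import structures.
From mathcomp Require Import all_boot all_order all_algebra.
From mathcomp Require Import reals.
Set Implicit Arguments. Unset Strict Implicit. Unset Printing Implicit Defensive.
Import Order.TTheory GRing.Theory Num.Theory.
Local Open Scope ring_scope.

(* Vectors in R^n are row vectors 'rV[R]_n.  Thresholds theta_1..theta_{K-1}
   are stored in 'rV[R]_(K.-1); the coordinate j : 'I_(K.-1) is theta_{j+1}. *)

Definition dot (R : realType) n (u v : 'rV[R]_n) : R := \sum_(i < n) u 0 i * v 0 i.
Definition sqn (R : realType) n (u : 'rV[R]_n) : R := dot u u.

Definition inI (n yl yr : nat) (j : 'I_n) : bool := (j.+1 < yl)%N || (yr <= j.+1)%N.

Definition pa2_feasible (R : realType) d n (x : 'rV[R]_d) (yl yr : nat)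
  (w : 'rV[R]_d) (th xi : 'rV[R]_n) : Prop :=
  forall j : 'I_n,
    ((j.+1 < yl)%N -> 1 - xi 0 j <= dot w x - th 0 j) /\
    ((yr <= j.+1)%N -> dot w x - th 0 j <= -1 + xi 0 j).

Definition pa2_obj (R : realType) d n (C : R) (yl yr : nat)
  (w0 : 'rV[R]_d) (th0 : 'rV[R]_n) (w : 'rV[R]_d) (th xi : 'rV[R]_n) : R :=
  2^-1 * sqn (w - w0) + 2^-1 * sqn (th - th0)
  + C * \sum_(j < n | inI yl yr j) xi 0 j ^+ 2.

Definition pa2_step (R : realType) d n (C : R) (x : 'rV[R]_d) (yl yr : nat)
  (w0 : 'rV[R]_d) (th0 : 'rV[R]_n) (w1 : 'rV[R]_d) (th1 : 'rV[R]_n) : Prop :=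
  exists xi : 'rV[R]_n,
    pa2_feasible x yl yr w1 th1 xi /\
    forall (w : 'rV[R]_d) (th xi' : 'rV[R]_n),
      pa2_feasible x yl yr w th xi' ->
      pa2_obj C yl yr w0 th0 w1 th1 xi <= pa2_obj C yl yr w0 th0 w th xi'.

Definition pa_loss (R : realType) d n (w : 'rV[R]_d) (th : 'rV[R]_n)
  (x : 'rV[R]_d) (yl yr : nat) (j : 'I_n) : R :=
  if (j.+1 < yl)%N then Num.max 0 (1 + th 0 j - dot w x)
  else if (yr <= j.+1)%N then Num.max 0 (1 + dot w x - th 0 j)
  else 0.

(* Main.v *)
Require Import Defs.
From HB Require Import structures.
From mathcomp Require Import all_boot all_order all_algebra.
From mathcomp Require Import reals.
From mathcomp Require Import zify ring lra.
Import Order.TTheory GRing.Theory Num.Theory.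
Local Open Scope ring_scope.

Set Implicit Arguments. Unset Strict Implicit.

Section S.
Variables (R : realType) (n : nat).
Implicit Types u v w : 'rV[R]_n.

Lemma dotDl u v w : dot (u + v) w = dot u w + dot v w.
Proof. rewrite /dot -big_split; apply: eq_bigr => i _; by rewrite mxE mulrDl. Qed.
Lemma dotNl u w : dot (- u) w = - dot u w.
Proof. rewrite /dot -sumrN; apply: eq_bigr => i _; by rewrite mxE mulNr. Qed.
Lemma dotBl u v w : dot (u - v) w = dot u w - dot v w.
Proof. by rewrite dotDl dotNl. Qed.
Lemma dotZl a u w : dot (a *: u) w = a * dot u w.
Proof. rewrite /dot mulr_sumr; apply: eq_bigr => i _; by rewrite mxE mulrA. Qed.
Lemma dotC u w : dot u w = dot w u.
Proof. rewrite /dot; apply: eq_bigr => i _; by rewrite mulrC. Qed.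
Lemma sqnD u v : sqn (u + v) = sqn u + 2 * dot u v + sqn v.
Proof. rewrite /sqn !dotDl (dotC u (u + v)) (dotC v (u + v)) !dotDl (dotC v u). ring. Qed.
Lemma sqnN u : sqn (- u) = sqn u.
Proof. by rewrite /sqn dotNl dotC dotNl opprK. Qed.
Lemma sqn_ge0 u : 0 <= sqn u.
Proof. rewrite /sqn /dot; apply: sumr_ge0 => i _; by rewrite -expr2 sqr_ge0. Qed.
End S.

Section S2.
Variables (R : realType) (n : nat).
Implicit Types u v w : 'rV[R]_n.
Lemma dotZr a u w : dot u (a *: w) = a * dot u w.
Proof. by rewrite dotC dotZl dotC. Qed.
Lemma sqnZ a u : sqn (a *: u) = a ^+ 2 * sqn u.
Proof. by rewrite /sqn dotZl dotZr mulrA expr2. Qed.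
Lemma sqnB u v : sqn (u - v) = sqn (v - u).
Proof. by rewrite -sqnN opprB. Qed.
End S2.

Lemma pos_lin (R : realType) (G H : R) : 0 <= H ->
  (forall e : R, 0 < e <= 1 -> 0 <= G + e * H) -> 0 <= G.
Proof.
move=> H0 he; rewrite leNgt; apply/negP => G0.
have hHG : 0 < H - G by lra.
have := he (- G / (H - G)).
have e0 : 0 < - G / (H - G) by apply: divr_gt0; lra.
have e1 : - G / (H - G) <= 1 by rewrite ler_pdivrMr // mul1r; lra.
rewrite e0 e1 => /(_ isT).
have -> : G + - G / (H - G) * H = - G ^+ 2 / (H - G).
  by field; rewrite lt0r_neq0.
rewrite pmulr_lge0 ?invr_gt0 // oppr_ge0 => h.
nra.
Qed.

Lemma opt_step (R : realType) d n (C : R) (x : 'rV[R]_d) yl yr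
  (w0 w1 u : 'rV[R]_d) (th0 th1 b xi : 'rV[R]_n) :
  0 < C ->
  pa2_feasible x yl yr w1 th1 xi ->
  (forall w th xi', pa2_feasible x yl yr w th xi' ->
      pa2_obj C yl yr w0 th0 w1 th1 xi <= pa2_obj C yl yr w0 th0 w th xi') ->
  pa2_feasible x yl yr u b 0 ->
  sqn (w1 - w0) + sqn (th1 - th0) + 2 * C * \sum_(j < n | inI yl yr j) xi 0 j ^+ 2
  <= (sqn (w0 - u) + sqn (th0 - b)) - (sqn (w1 - u) + sqn (th1 - b)).
Proof.
move=> C0 f1 hmin fu.
set S := \sum_(j < n | inI yl yr j) xi 0 j ^+ 2.
have S0 : 0 <= S by apply: sumr_ge0 => j _; exact: sqr_ge0.
set G := dot (w1 - w0) (u - w1) + dot (th1 - th0) (b - th1) - 2 * C * S.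
set H := 2^-1 * sqn (u - w1) + 2^-1 * sqn (b - th1) + C * S.
have H0 : 0 <= H.
  have := sqn_ge0 (u - w1); have := sqn_ge0 (b - th1).
  have : 0 <= C * S by apply: mulr_ge0 => //; lra.
  rewrite /H; lra.
have G0 : 0 <= G.
  apply: (pos_lin H0) => e /andP [e0 e1].
  have fe : pa2_feasible x yl yr (w1 + e *: (u - w1)) (th1 + e *: (b - th1)) ((1 - e) *: xi).
    move=> j; have [f1a f1b] := f1 j; have [fua fub] := fu j.
    rewrite dotDl dotZl dotBl !mxE.
    split=> hj.
      have h1 := f1a hj; have h2 := fua hj; move: h1 h2; rewrite mxE => h1 h2.
      have : 0 <= (1 - e) * (dot w1 x - th1 0 j - 1 + xi 0 j) by apply: mulr_ge0; lra.
      have : 0 <= e * (dot u x - b 0 j - 1) by apply: mulr_ge0; lra.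
      move=> p1 p2. nra.
    have h1 := f1b hj; have h2 := fub hj; move: h1 h2; rewrite mxE => h1 h2.
    have : 0 <= (1 - e) * (- 1 + xi 0 j - (dot w1 x - th1 0 j)) by apply: mulr_ge0; lra.
    have : 0 <= e * (-1 - (dot u x - b 0 j)) by apply: mulr_ge0; lra.
    move=> p1 p2. nra.
  have := hmin _ _ _ fe.
  rewrite /pa2_obj.
  have -> : w1 + e *: (u - w1) - w0 = (w1 - w0) + e *: (u - w1) by rewrite addrAC.
  have -> : th1 + e *: (b - th1) - th0 = (th1 - th0) + e *: (b - th1) by rewrite addrAC.
  rewrite !sqnD !dotZr !sqnZ.
  have -> : \sum_(j < n | inI yl yr j) ((1 - e) *: xi) 0 j ^+ 2 = (1 - e) ^+ 2 * S.
    rewrite /S mulr_sumr; apply: eq_bigr => j _; by rewrite mxE exprMn.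
  rewrite -/S => hle.
  have : 0 <= e * (G + e * H).
    move: hle; rewrite /G /H; nra.
  by rewrite pmulr_rge0.
have eqv : forall (V : zmodType) (a b c : V), a - c = - ((b - a) + (c - b)).
  by move=> V a b' c; rewrite [(b' - a) + _]addrC addrA subrK opprB.
rewrite (eqv _ w0 w1 u) (eqv _ th0 th1 b).
rewrite !sqnN (sqnD (w1 - w0)) (sqnD (th1 - th0)) (sqnB w1 u) (sqnB th1 b).
move: G0; rewrite /G => G0.
have : 0 <= C * S by apply: mulr_ge0 => //; lra.
nra.
Qed.

Lemma amgm (R : realType) (k a b : R) : 0 < k -> 2 * a * b <= k * a ^+ 2 + b ^+ 2 / k.
Proof.
move=> k0.
have h : 0 <= (k * a - b) ^+ 2 / k by apply: divr_ge0; [exact: sqr_ge0|lra].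
have -> : k * a ^+ 2 + b ^+ 2 / k = (k * a - b) ^+ 2 / k + 2 * a * b.
  by field; rewrite lt0r_neq0.
lra.
Qed.

Lemma lin_lemma (R : realType) (T1 N A B M : R) :
  0 <= N -> 0 <= A -> 0 <= B -> 0 < M ->
  (forall mu, 0 < mu -> 2 * mu * T1 <= mu ^+ 2 * N * A + B) ->
  2 * M * T1 <= M ^+ 2 * A + N * B.
Proof.
move=> N0 A0 B0 M0 h.
have [Ne|Npos] := eqVneq N 0.
  have T0 : T1 <= 0.
    rewrite leNgt; apply/negP => T0.
    have := h ((B + 1) / (2 * T1)) (divr_gt0 (ltr_pwDr ltr01 B0) (mulr_gt0 (ltr0Sn _ 1) T0)).
    have -> : 2 * ((B + 1) / (2 * T1)) * T1 = B + 1 by field; rewrite lt0r_neq0.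
    rewrite Ne mulr0 mul0r add0r; lra.
  have : 0 <= M ^+ 2 * A by apply: mulr_ge0 => //; exact: sqr_ge0.
  rewrite Ne mul0r addr0; nra.
have Ng : 0 < N by rewrite lt0r Npos.
have := h (M / N) (divr_gt0 M0 Ng).
have -> : (M / N) ^+ 2 * N * A + B = (M ^+ 2 * A + N * B) / N.
  by field; rewrite lt0r_neq0.
have -> : 2 * (M / N) * T1 = (2 * M * T1) / N by field; rewrite lt0r_neq0.
by rewrite ler_pM2r ?invr_gt0.
Qed.

Lemma loss_step (R : realType) d n (C : R) (x w0 w1 : 'rV[R]_d) yl yr
  (th0 th1 xi : 'rV[R]_n) :
  0 < C -> pa2_feasible x yl yr w1 th1 xi ->
  \sum_(j < n) pa_loss w0 th0 x yl yr j ^+ 2 <=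
  (1 + (2 * C)^-1 + sqn x * \sum_(j < n) (inI yl yr j)%:R) *
  (sqn (w1 - w0) + sqn (th1 - th0) + 2 * C * \sum_(j < n | inI yl yr j) xi 0 j ^+ 2).
Proof.
move=> C0 f1.
set l := fun j => pa_loss w0 th0 x yl yr j.
set sg := fun j : 'I_n => if (j.+1 < yl)%N then 1 else if (yr <= j.+1)%N then -1 else (0:R).
set io := fun j : 'I_n => (inI yl yr j)%:R : R.
set dw := w1 - w0. set dth := th1 - th0.
set L := \sum_(j < n) l j ^+ 2.
set N := \sum_(j < n) io j.
set S := \sum_(j < n | inI yl yr j) xi 0 j ^+ 2.
have l0 j : 0 <= l j.
  rewrite /l /pa_loss; case: ifP => _; last case: ifP => _ //; by rewrite le_max lexx.
have sg2 j : sg j ^+ 2 = io j.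
  rewrite /sg /io /inI; case: ifP => h1 /=; first by rewrite expr1n.
  by case: ifP => h2 /=; rewrite ?sqrrN ?expr1n ?expr0n.
have io2 j : io j ^+ 2 = io j.
  by rewrite /io; case: (inI yl yr j); rewrite ?expr1n ?expr0n.
have lio j : l j ^+ 2 * io j = l j ^+ 2.
  rewrite /l /pa_loss /io /inI; case: ifP => h1 /=; first by rewrite mulr1.
  by case: ifP => h2 /=; rewrite ?mulr1 ?mulr0 ?expr0n.
have key j : l j ^+ 2 <= l j * (sg j * (dot dw x - dth 0 j) + io j * xi 0 j).
  have [fa fb] := f1 j.
  rewrite /l /pa_loss /sg /io /inI /dw /dth dotBl !mxE.
  case: ifP => h1 /=.
    have := fa h1; set a := 1 + th0 0 j - dot w0 x => hf.
    rewrite maxEle; case: ifP => ha; last by rewrite expr0n mul0r.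
    have : 0 <= a * (1 * (dot w1 x - dot w0 x - (th1 0 j - th0 0 j)) + 1 * xi 0 j - a).
      by apply: mulr_ge0 => //; rewrite /a; lra.
    nra.
  case: ifP => h2 /=; last by rewrite expr0n mul0r.
  have := fb h2; set a := 1 + dot w0 x - th0 0 j => hf.
  rewrite maxEle; case: ifP => ha; last by rewrite expr0n mul0r.
  have : 0 <= a * (-1 * (dot w1 x - dot w0 x - (th1 0 j - th0 0 j)) + 1 * xi 0 j - a).
    by apply: mulr_ge0 => //; rewrite /a; lra.
  nra.
set T1 := \sum_(j < n) l j * sg j * dot dw x.
set T2 := \sum_(j < n) - (l j * sg j * dth 0 j).
set T3 := \sum_(j < n) l j * io j * xi 0 j.
have hL : L <= T1 + T2 + T3.
  rewrite /L /T1 /T2 /T3 -!big_split /=; apply: ler_sum => j _.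
  have := key j; nra.
set M := 1 + (2 * C)^-1 + sqn x * N.
have N0 : 0 <= N by apply: sumr_ge0 => j _; rewrite /io ler0n.
have M0 : 0 < M.
  have : 0 <= sqn x * N by apply: mulr_ge0 => //; exact: sqn_ge0.
  have : 0 < (2 * C)^-1 by rewrite invr_gt0; lra.
  rewrite /M; lra.
have B2 : 2 * T2 <= M * sqn dth + L / M.
  rewrite /T2 /sqn /dot /L mulr_sumr mulr_sumr mulr_suml -big_split /=.
  apply: ler_sum => j _.
  have h := amgm (dth 0 j) (- (l j * sg j)) M0.
  have e : (- (l j * sg j)) ^+ 2 = l j ^+ 2.
    by rewrite sqrrN exprMn sg2 lio.
  move: h; rewrite e expr2; nra.
have B3 : 2 * T3 <= M * (2 * C * S) + L / (2 * C * M).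
  have -> : S = \sum_(j < n) io j * xi 0 j ^+ 2.
    rewrite /S big_mkcond /=; apply: eq_bigr => j _.
    by rewrite /io; case: (inI yl yr j); rewrite ?mul1r ?mul0r.
  have k0 : 0 < 2 * C * M by apply: mulr_gt0 => //; lra.
  rewrite /T3 /L mulr_sumr mulr_sumr mulr_sumr mulr_suml -big_split /=.
  apply: ler_sum => j _.
  have h := amgm (io j * xi 0 j) (l j) k0.
  move: h; rewrite exprMn io2; nra.
have B1 : forall mu, 0 < mu -> 2 * mu * T1 <= mu ^+ 2 * N * sqn dw + sqn x * L.
  move=> mu mu0.
  have -> : 2 * mu * T1 = \sum_(j < n) \sum_(k < d) 2 * (mu * (sg j * dw 0 k)) * (l j * x 0 k).
    rewrite /T1 /dot mulr_sumr; apply: eq_bigr => j _; rewrite !mulr_sumr.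
    apply: eq_bigr => k _; ring.
  have -> : mu ^+ 2 * N * sqn dw = \sum_(j < n) \sum_(k < d) (mu * (sg j * dw 0 k)) ^+ 2.
    rewrite -mulrA /N /sqn /dot mulr_suml mulr_sumr; apply: eq_bigr => j _.
    rewrite !mulr_sumr; apply: eq_bigr => k _; rewrite -sg2; ring.
  have -> : sqn x * L = \sum_(j < n) \sum_(k < d) (l j * x 0 k) ^+ 2.
    rewrite mulrC /L /sqn /dot mulr_suml; apply: eq_bigr => j _.
    rewrite mulr_sumr; apply: eq_bigr => k _; ring.
  rewrite -big_split /=; apply: ler_sum => j _; rewrite -big_split /=.
  apply: ler_sum => k _.
  have := amgm (mu * (sg j * dw 0 k)) (l j * x 0 k) ltr01.
  by rewrite mul1r divr1.
have L0 : 0 <= L by apply: sumr_ge0 => j _; exact: sqr_ge0.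
have sx0 : 0 <= sqn x by exact: sqn_ge0.
have hB1 := lin_lemma N0 (sqn_ge0 dw) (mulr_ge0 sx0 L0) M0 B1.
have B2' : 2 * M * T2 <= M ^+ 2 * sqn dth + L.
  have h : M * (2 * T2) <= M * (M * sqn dth + L / M) by rewrite ler_pM2l.
  have e : M * (M * sqn dth + L / M) = M ^+ 2 * sqn dth + L by field; rewrite lt0r_neq0.
  by move: h; rewrite e mulrA [M * 2]mulrC.
have B3' : 2 * M * T3 <= M ^+ 2 * (2 * C * S) + L * (2 * C)^-1.
  have h : M * (2 * T3) <= M * (M * (2 * C * S) + L / (2 * C * M)) by rewrite ler_pM2l.
  have e : M * (M * (2 * C * S) + L / (2 * C * M)) = M ^+ 2 * (2 * C * S) + L * (2 * C)^-1.
    by field; rewrite !lt0r_neq0 //; lra.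
  by move: h; rewrite e mulrA [M * 2]mulrC.
set Q := sqn dw + sqn dth + 2 * C * S.
have hM : M * L <= M * (M * Q).
  have e1 : M * L = (1 + (2 * C)^-1) * L + N * (sqn x * L) by rewrite /M; ring.
  have e2 : M * (M * Q) = M ^+ 2 * sqn dw + M ^+ 2 * sqn dth + M ^+ 2 * (2 * C * S) by rewrite /Q; ring.
  have hML : M * L <= M * (T1 + T2 + T3) by rewrite ler_pM2l.
  rewrite e2; move: hML; rewrite e1; nra.
by rewrite ler_pM2l in hM.
Qed.

Lemma count_inI (R : realType) K yl yr : (1 <= yl)%N -> (yl <= yr)%N -> (yr <= K)%N ->
  \sum_(j < K.-1) ((inI yl yr j)%:R : R) = ((K.-1 - (yr - yl))%N)%:R.
Proof.
move=> h1 h2 h3.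
rewrite -natr_sum; congr (_ %:R).
have -> : (\sum_(j < K.-1) inI yl yr j = \sum_(0 <= j < K.-1) ((j.+1 < yl) || (yr <= j.+1) : nat))%N.
  by rewrite big_mkord.
rewrite (@big_cat_nat _ _ _ yl.-1) /=; [|lia|lia].
rewrite (@big_cat_nat _ _ _ yr.-1 yl.-1) /=; [|lia|lia].
rewrite (@eq_big_nat _ _ _ 0 yl.-1 _ (fun _ => 1%N)); last first.
  move=> i /andP [_ hi]; have -> : (i.+1 < yl)%N by lia. by [].
rewrite (@eq_big_nat _ _ _ yl.-1 yr.-1 _ (fun _ => 0%N)); last first.
  move=> i /andP [hi hi']; have -> : (i.+1 < yl)%N = false by lia.
  by have -> : (yr <= i.+1)%N = false by lia.
rewrite (@eq_big_nat _ _ _ yr.-1 K.-1 _ (fun _ => 1%N)); last first.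
  move=> i /andP [hi hi']; have -> : (yr <= i.+1)%N by lia. by rewrite orbT.
rewrite !sum_nat_const_nat; lia.
Qed.

Lemma nbigmin_le (T : nat) (F : nat -> nat) (K : nat) (t : 'I_T) :
  (\big[minn/K]_(i < T) F i <= F t)%N.
Proof.
have : t \in index_enum 'I_T by rewrite mem_index_enum.
elim: (index_enum 'I_T) => [//|i r IH]; rewrite inE big_cons => /orP [/eqP <-|h].
  exact: geq_minl.
exact: leq_trans (geq_minr _ _) (IH h).
Qed.

Lemma nbigmin_leK (T : nat) (F : nat -> nat) (K : nat) :
  (\big[minn/K]_(i < T) F i <= K)%N.
Proof.
apply: (big_rec (fun x => (x <= K)%N)) => // i x _ hx.
exact: leq_trans (geq_minr _ _) hx.
Qed.

Unset Implicit Arguments. Set Strict Implicit.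

Lemma telesc (R : realType) (P : nat -> R) T :
  \sum_(t < T) (P t - P t.+1) = P 0%N - P T.
Proof.
elim: T => [|T IH]; first by rewrite big_ord0 subrr.
rewrite big_ord_recr /= IH; ring.
Qed.

Theorem corollary3 (R : realType) (d K T : nat) (C : R)
  (x : nat -> 'rV[R]_d) (yl yr : nat -> nat)
  (w : nat -> 'rV[R]_d) (th : nat -> 'rV[R]_(K.-1))
  (u : 'rV[R]_d) (b : 'rV[R]_(K.-1)) :
  (0 < T)%N -> 0 < C ->
  (forall t, (t < T)%N -> [/\ (1 <= yl t)%N, (yl t <= yr t)%N & (yr t <= K)%N]) ->
  w 0%N = 0 -> th 0%N = 0 ->
  (forall t, (t < T)%N ->
     pa2_step C (x t) (yl t) (yr t) (w t) (th t) (w t.+1) (th t.+1)) ->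
  (forall t, (t < T)%N -> forall j : 'I_(K.-1),
     ((j.+1 < yl t)%N -> 1 <= dot u (x t) - b 0 j) /\
     ((yr t <= j.+1)%N -> dot u (x t) - b 0 j <= -1)) ->
  let c := \big[minn/K]_(t < T) (yr t - yl t)%N in
  let R2 := \big[Num.max/0]_(t < T) sqn (x t) in
  \sum_(t < T) \sum_(j < K.-1) (pa_loss (w t) (th t) (x t) (yl t) (yr t) j) ^+ 2
  <= (1 + (2 * C)^-1 + R2 * (K%:R - c%:R - 1)) * (sqn u + sqn b).
Proof.
move=> T0 C0 hy w00 th00 hstep hideal; cbv zeta.
set c := \big[minn/K]_(t < T) (yr t - yl t)%N.
set R2 := \big[Num.max/0]_(t < T) sqn (x t).
set Phi := fun t => sqn (w t - u) + sqn (th t - b).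
set M := 1 + (2 * C)^-1 + R2 * (K%:R - c%:R - 1).
have M0 : 0 <= M.
  pose t0 : 'I_T := Ordinal T0.
  have [hy1 hy2 hy3] := hy 0%N T0.
  have hx : sqn (x t0) <= R2 by rewrite /R2; exact: (le_bigmax 0 (fun i : 'I_T => sqn (x i)) t0).
  have hx0 := sqn_ge0 (x t0).
  have hc : (c <= yr t0 - yl t0)%N by rewrite /c; exact: (@nbigmin_le T (fun t => (yr t - yl t)%N) K t0).
  have hn : (c + 1 <= K)%N by rewrite /= in hc; lia.
  have := hn; rewrite -(ler_nat R) natrD => hn'.
  have : 0 <= R2 * (K%:R - c%:R - 1) by apply: mulr_ge0; lra.
  have : 0 < (2 * C)^-1 by rewrite invr_gt0; lra.
  rewrite /M; lra.
have step : forall t : 'I_T,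
    \sum_(j < K.-1) (pa_loss (w t) (th t) (x t) (yl t) (yr t) j) ^+ 2
    <= M * (Phi t - Phi t.+1).
  move=> t.
  have [hy1 hy2 hy3] := hy t (ltn_ord t).
  have [xi [f1 hmin]] := hstep t (ltn_ord t).
  have fu : pa2_feasible (x t) (yl t) (yr t) u b 0.
    move=> j; have [ha hb] := hideal t (ltn_ord t) j.
    by rewrite mxE subr0 addr0.
  have hopt := opt_step C0 f1 hmin fu.
  have hl := @loss_step R d K.-1 C (x t) (w t) (w t.+1) (yl t) (yr t) (th t) (th t.+1) xi C0 f1.
  rewrite count_inI // in hl.
  set Q := sqn (w t.+1 - w t) + sqn (th t.+1 - th t) +
    2 * C * \sum_(j < K.-1 | inI (yl t) (yr t) j) xi 0 j ^+ 2 in hopt hl.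
  have Q0 : 0 <= Q.
    have : 0 <= \sum_(j < K.-1 | inI (yl t) (yr t) j) xi 0 j ^+ 2.
      by apply: sumr_ge0 => j _; exact: sqr_ge0.
    have := sqn_ge0 (w t.+1 - w t); have := sqn_ge0 (th t.+1 - th t).
    rewrite /Q; nra.
  have hx : sqn (x t) <= R2 by rewrite /R2; exact: (le_bigmax 0 (fun i : 'I_T => sqn (x i)) t).
  have hc : (c <= yr t - yl t)%N.
    by rewrite /c; exact: (@nbigmin_le T (fun t => (yr t - yl t)%N) K t).
  have hn : (K.-1 - (yr t - yl t) + c + 1 <= K)%N by lia.
  have := hn; rewrite -(ler_nat R) !natrD => hn'.
  have hx0 := sqn_ge0 (x t).
  have hN0 : 0 <= ((K.-1 - (yr t - yl t))%N%:R : R) by rewrite ler0n.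
  have hMt : 1 + (2 * C)^-1 + sqn (x t) * (K.-1 - (yr t - yl t))%:R <= M.
    rewrite /M; have : sqn (x t) * (K.-1 - (yr t - yl t))%:R <= R2 * (K%:R - c%:R - 1).
      by apply: ler_pM => //; lra.
    lra.
  apply: (le_trans hl).
  apply: (le_trans (ler_wpM2r Q0 hMt)).
  by apply: ler_wpM2l.
apply: (le_trans (ler_sum _ (fun t _ => step t))).
rewrite -mulr_sumr (@telesc R Phi T).
apply: ler_wpM2l => //.
rewrite /Phi w00 th00 !sub0r !sqnN.
have := sqn_ge0 (w T - u); have := sqn_ge0 (th T - b); lra.
Qed.
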